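(* Let $T$ be a random variable on $\mathbb{N}$ with $q_t=\mathbb{P}(T=t)$ and suppose $\mathbb{E}[T^\delta]<\infty$ for some $\delta>0$. Fix $\tau\in(0,1)$. Then for every $r\in(0,\delta)$ there exists a constant $\widehat{C}_r>0$ such that for all sufficiently large $n$, $$\mathbb{P}(T>u_n^\uparrow(\tau))\le\widehat{C}_r\,n^{\frac{(\tau-1)(\delta-r)}{1+\delta}}.$$
   Context: $u_n^\uparrow(\tau):=\inf\{t:q_s<n^{-1+\tau}\text{ for all }s\ge t\}$. *)

(* Defs.v *)
From HB Require Import structures.
From mathcomp Require Import all_boot all_order all_algebra.
From mathcomp Require Import all_classical all_reals all_analysis.
Set Implicit Arguments. Unset Strict Implicit. Unset Printing Implicit Defensive.
Import Order.TTheory GRing.Theory Num.Theory.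
Local Open Scope ring_scope.

(* The law of an N-valued random variable T is given by its pmf
   q t = P(T = t). *)

Definition u_set {R : realType} (q : nat -> R) (n : nat) (tau : R) : pred nat :=
  fun t => `[< forall s : nat, (t <= s)%N -> q s < (n%:R) `^ (-1 + tau) >].

Definition u_up {R : realType} (q : nat -> R) (n : nat) (tau : R) : nat :=
  match pselect (exists t, u_set q n tau t) with
  | left h => ex_minn h
  | right _ => 0%N
  end.

Definition tail_prob {R : realType} (q : nat -> R) (u : nat) : R :=
  limn (fun m : nat => \sum_(u.+1 <= t < m) q t).

(* Main.v *)
Require Import Defs.
From HB Require Import structures.
From mathcomp Require Import all_boot all_order all_algebra.
From mathcomp Require Import all_classical all_reals all_analysis.
From mathcomp Require Import zify ring lra.
Import Order.TTheory GRing.Theory Num.Theory.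
Local Open Scope classical_set_scope.
Local Open Scope ring_scope.

Lemma ind_sum (R : realType) (eps : R) (K m : nat) : 0 <= eps ->
  \sum_(0 <= t < m) (if (t <= K)%N then eps else 0) <= (minn m K.+1)%:R * eps.
Proof.
move=> e0; elim: m => [|m IH]; first by rewrite big_geq // mul0r.
rewrite big_nat_recr //=; case: (leqP m K) => hm.
  have -> : minn m.+1 K.+1 = (minn m K.+1).+1 by rewrite !minnE; lia.
  by rewrite -[(minn m K.+1).+1]addn1 natrD mulrDl mul1r lerD2r.
have -> : minn m.+1 K.+1 = minn m K.+1 by rewrite !minnE; lia.
by rewrite addr0.
Qed.

Lemma tail_bound (R : realType) (q : nat -> R) (delta eps X M : R) (u : nat) :
  (forall t, 0 <= q t) -> 0 < delta -> 0 <= eps -> 0 < X ->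
  (forall m, series (fun t : nat => (t%:R) `^ delta * q t) m <= M) ->
  (forall s, (u < s)%N -> q s < eps) ->
  tail_prob q u <= (Num.truncn X).+1%:R * eps + M / X `^ delta.
Proof.
move=> hq0 hd he hX hM hs.
set K := Num.truncn X.
set f := fun m : nat => \sum_(u.+1 <= t < m) q t.
have hXd : 0 < X `^ delta by apply: powR_gt0.
have M0 : 0 <= M by apply: le_trans (hM 0%N); rewrite /series /= big_geq.
have B0 : 0 <= (Num.truncn X).+1%:R * eps + M / X `^ delta.
  by apply: addr_ge0; [apply: mulr_ge0|apply: divr_ge0] => //; apply: ltW.
have fB : forall m, f m <= (Num.truncn X).+1%:R * eps + M / X `^ delta.
  move=> m; rewrite /f; case: (leqP u.+1 m) => hm; last by rewrite big_geq // ltnW.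
  apply: le_trans (_ : \sum_(u.+1 <= t < m) ((if (t <= K)%N then eps else 0)
       + (t%:R `^ delta * q t) / X `^ delta) <= _).
    apply: ler_sum_nat => t /andP[ht1 ht2].
    have qe := hs t ht1.
    case: (leqP t K) => htK.
      apply: le_trans (ltW qe) _; rewrite lerDl.
      by apply: divr_ge0; [apply: mulr_ge0; [apply: powR_ge0|]|apply: ltW].
    rewrite add0r ler_pdivlMr // mulrC ler_wpM2r //.
    apply: ge0_ler_powR; rewrite ?nnegrE ?ltW //.
      by rewrite ltr0n; lia.
    apply: lt_le_trans (truncnS_gt X) _; rewrite ler_nat; done.
  rewrite big_split /=; apply: lerD.
    apply: (le_trans _ (le_trans (@ind_sum _ _ K m he) _)).
    rewrite [X in _ <= X](big_cat_nat _ (n:=u.+1)) //= lerDr.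
    by apply: sumr_ge0 => t _; case: ifP.
    apply: ler_wpM2r => //; rewrite ler_nat; apply: geq_minr.
  rewrite -mulr_suml; apply: ler_wpM2r; first by rewrite invr_ge0 ltW.
  apply: le_trans _ (hM m); rewrite /series /=.
  rewrite [X in _ <= X](big_cat_nat _ (n:=u.+1)) //= lerDr.
  by apply: sumr_ge0 => t _; rewrite mulr_ge0 ?powR_ge0.
have fnd : nondecreasing_seq f.
  apply/nondecreasing_seqP => m; rewrite /f.
  case: (leqP u.+1 m) => hm.
    by rewrite big_nat_recr //= lerDl.
  rewrite (big_geq (ltnW hm)); apply: sumr_ge0 => t _; done.
have fc : cvgn f.
  apply: nondecreasing_is_cvgn => //.
  by exists ((Num.truncn X).+1%:R * eps + M / X `^ delta) => _ [m _ <-].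
rewrite /tail_prob -/f.
apply: limr_le => //; exact: nearW.
Qed.

Lemma u_up_prop (R : realType) (q : nat -> R) (n : nat) (tau : R) :
  (exists t, forall s, (t <= s)%N -> q s < (n%:R) `^ (-1 + tau)) ->
  forall s, (u_up q n tau < s)%N -> q s < (n%:R) `^ (-1 + tau).
Proof.
move=> [t ht] s hs; move: hs; rewrite /u_up.
case: pselect => [h|h]; last first.
  exfalso; apply: h; exists t; exact/asboolP.
case: ex_minnP => m Hm _ hms.
by move/asboolP: Hm; apply; apply: ltnW.
Qed.

Theorem lemma7 (R : realType) (q : nat -> R) (delta tau : R)
  (hq0 : forall t, 0 <= q t)
  (hq1 : series q @ \oo --> (1 : R^o))
  (hdelta : 0 < delta)
  (hmom : cvgn (series (fun t : nat => ((t%:R) `^ delta * q t : R^o))))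
  (htau0 : 0 < tau) (htau1 : tau < 1) :
  forall r : R, 0 < r -> r < delta ->
  exists C : R, 0 < C /\ exists N : nat, forall n : nat, (N <= n)%N ->
    tail_prob q (u_up q n tau)
      <= C * (n%:R) `^ ((tau - 1) * (delta - r) / (1 + delta)).
Proof.
move=> r r0 rd.
set mom := (fun t : nat => ((t%:R) `^ delta * q t : R^o)).
set M := limn (series mom).
have hM : forall m, series mom m <= M.
  apply: nondecreasing_cvgn_le => //.
  apply/nondecreasing_seqP => m; rewrite /series /= big_nat_recr //= lerDl.
  by rewrite /mom mulr_ge0 ?powR_ge0.
have M0 : 0 <= M by apply: le_trans (hM 0%N); rewrite /series /= big_geq.
have q0 : q @ \oo --> (0 : R^o).
  apply: cvg_series_cvg_0; apply/cvg_ex; exists 1; exact: hq1.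
exists (2 + M); split; first by apply: ltr_wpDr.
exists 1%N => n hn.
have n1 : 1 <= (n%:R : R) by rewrite ler1n.
have n0 : 0 < (n%:R : R) by apply: lt_le_trans n1.
set eps := (n%:R : R) `^ (-1 + tau).
have eps0 : 0 < eps by apply: powR_gt0.
have hex : exists t, forall s, (t <= s)%N -> q s < eps.
  have := @cvgr_lt R _ _ _ q 0 q0 eps eps0; case=> N _ HN; exists N => s hs; exact: HN.
set a := (1 - tau) / (1 + delta).
have d1 : 1 + delta != 0 by rewrite gt_eqF // ltr_wpDr // ltW.
have a0 : 0 <= a by rewrite divr_ge0 ?subr_ge0 ?ltW // ltr_wpDr // ltW.
set X := (n%:R : R) `^ a.
have X0 : 0 < X by apply: powR_gt0.
apply: le_trans (@tail_bound _ _ _ _ _ _ _ hq0 hdelta (ltW eps0) X0 hM (@u_up_prop _ _ _ _ hex)) _.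
set e1 := - (a * delta).
set e2 := (tau - 1) * (delta - r) / (1 + delta).
have E1 : a + (-1 + tau) = e1 by rewrite /e1 /a; field.
have E2 : e2 = e1 + (1 - tau) * r / (1 + delta) by rewrite /e2 /e1 /a; field.
have le12 : e1 <= e2.
  rewrite E2 lerDl divr_ge0 ?mulr_ge0 ?subr_ge0 ?ltW //.
  by rewrite ltr_wpDr // ltW.
have lee1 : -1 + tau <= e1 by rewrite -E1 lerDr.
have Xe : X * eps = n%:R `^ e1.
  by rewrite /X /eps -powRD ?E1 //; apply/implyP => _; rewrite gt_eqF.
have Xd : M / X `^ delta = M * n%:R `^ e1.
  by rewrite /X -powRrM /e1 powRN.
have eps1 : eps <= n%:R `^ e1 by apply: ler_powR.
have K1 : (Num.truncn X).+1%:R <= X + 1.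
  by rewrite -addn1 natrD lerD2r truncn_le ltW.
apply: le_trans (_ : (X + 1) * eps + M / X `^ delta <= _).
  by rewrite lerD2r ler_wpM2r // ltW.
rewrite mulrDl Xe mul1r Xd.
apply: le_trans (_ : (2 + M) * n%:R `^ e1 <= _); last first.
  by apply: ler_wpM2l; [rewrite addr_ge0 | apply: ler_powR].
by move: eps1; set y := n%:R `^ e1; lra.
Qed.
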